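(* Let $M$ be a finite abelian group of even order and exponent greater than $2$, written as $M=C_{2i_1}\times\cdots\times C_{2i_s}\times M_1$ with $|M_1|$ odd, $s\geq 1$, $i_j\geq1$. Let $H=\{x\in M: x^2=1\}$, $\mathcal{A}=\{F^+_{(f',f'',1,1)}: f'\in\mathrm{Aut}(K), f''\in\mathrm{Aut}(M)\}$ and $\mathcal{B}=\{F^+_{(I_K,I_M,x,y)}: x,y\in H\}$. Then (a) $\mathcal{B}\cong H\times H\cong C_2^{2s}$; (b) $\mathcal{B}$ is a normal subgroup of $\mathrm{Aut}(L_M)$; (c) $\mathrm{Aut}(L_M)/\mathcal{B}\cong\mathcal{A}$.
   Context: $C_n$ denotes the cyclic group of order $n$. Let $K=\{1,a,b,c\}$ be the Klein four-group. Set $L_M=K\times M$ with the operation $(A,x)*(B,y)=(AB,xy)$ if $B=1$, and $(A,x)*(B,y)=(AB,x^{-1}y)$ if $B\neq 1$. For $u,v\in M$ with $u^2=v^2=1$, $\alpha_{(u,v)}:K\to M$ is defined by $\alpha_{(u,v)}(1)=1$, $\alpha_{(u,v)}(a)=u$, $\alpha_{(u,v)}(b)=v$, $\alpha_{(u,v)}(c)=uv$. For $f'\in\mathrm{Aut}(K)$, $f''\in\mathrm{Aut}(M)$ define $F^+_{(f',f'',u,v)}(A,x)=(f'(A),f''(x)\alpha_{(u,v)}(A))$. $I_K$, $I_M$ are the identity maps of $K$, $M$. $\mathcal{A}$ and $\mathcal{B}$ are subgroups of $\mathrm{Aut}(L_M)$ under composition. *)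

(* Defs.v *)
From mathcomp Require Import all_boot all_fingroup all_algebra all_solvable.
Set Implicit Arguments. Unset Strict Implicit. Unset Printing Implicit Defensive.
Local Open Scope group_scope.

(* Klein four-group K = C_2 x C_2 ; a = (1,0), b = (0,1), c = (1,1). *)
Definition Klein : finGroupType := ('Z_2 * 'Z_2)%type.

Section Loop.
Variable gT : finGroupType.

Definition Lcar := (Klein * gT)%type.

Definition Lmul (p q : Lcar) : Lcar :=
  if q.1 == 1 then (p.1 * q.1, p.2 * q.2) else (p.1 * q.1, p.2^-1 * q.2).

Definition AutL : {set {perm Lcar}} :=
  [set f : {perm Lcar} | [forall p, forall q, f (Lmul p q) == Lmul (f p) (f q)]].

(* alpha_(u,v) : 1 |-> 1, a |-> u, b |-> v, c |-> uv *)
Definition alpha (u v : gT) (A : Klein) : gT := u ^+ (val A.1) * v ^+ (val A.2).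

Definition Fplus (f' : {perm Klein}) (f'' : {perm gT}) (u v : gT) (p : Lcar) : Lcar :=
  (f' p.1, f'' p.2 * alpha u v p.1).

Definition Hinv : {set gT} := [set x : gT | x ^+ 2 == 1].

Definition Aset : {set {perm Lcar}} :=
  [set g : {perm Lcar} | [exists f' in Aut [set: Klein], exists f'' in Aut [set: gT],
      [forall p, g p == Fplus f' f'' 1 1 p]]].

Definition Bset : {set {perm Lcar}} :=
  [set g : {perm Lcar} | [exists x in Hinv, exists y in Hinv,
      [forall p, g p == Fplus 1 1 x y p]]].
End Loop.

Definition C2pow (n : nat) : {set {dffun forall i : 'I_n, 'Z_2}} := [set: {dffun forall i : 'I_n, 'Z_2}].

(* Main.v *)
Require Import Defs.
From mathcomp Require Import all_boot all_fingroup all_algebra all_solvable.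
Set Implicit Arguments. Unset Strict Implicit. Unset Printing Implicit Defensive.
Local Open Scope group_scope.

Definition ka : Klein := (@Ordinal 2 1 isT, @Ordinal 2 0 isT).
Definition kb : Klein := (@Ordinal 2 0 isT, @Ordinal 2 1 isT).
Lemma Kcases (A : Klein) : [|| A == 1, A == ka, A == kb | A == ka * kb].
Proof. by case: A => -[[|[|n]] Hn] [[|[|m]] Hm]. Qed.
Lemma Ksq (A : Klein) : A * A = 1.
Proof. apply/eqP. by case: A => -[[|[|n]] Hn] [[|[|m]] Hm]. Qed.
Lemma Kother (A : Klein) : A != 1 -> exists B : Klein, (B != 1) && (A * B != 1).
Proof.
case: A => -[[|[|n]] Hn] [[|[|m]] Hm] //= _.
- by exists ka.
- by exists kb.
- by exists ka.
Qed.

Lemma inv_sq (gT : finGroupType) (x : gT) : x ^+ 2 = 1 -> x^-1 = x.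
Proof. by move=> sq; rewrite -[x^-1]mulg1 -sq expgS expg1 mulKg. Qed.

Section Struct.
Variable gT : finGroupType.
Hypothesis cM : forall x y : gT, commute x y.
Hypothesis ex2 : exists z : gT, z ^+ 2 != 1.
Variable phi : {perm Lcar gT}.
Hypothesis phiM : forall p q, phi (Lmul p q) = Lmul (phi p) (phi q).

Lemma Lmul1r (A : Klein) (x y : gT) : Lmul (A, x) (1, y) = (A, x * y).
Proof. by rewrite /Lmul /= mulg1. Qed.

Lemma phi_e : phi (1, 1) = (1, 1).
Proof.
have := phiM (1,1) (1,1); rewrite Lmul1r mulg1.
case E: (phi (1,1)) => [A x]; rewrite /Lmul /=.
case: eqP => [-> | nA]; last by rewrite Ksq; case=> A1; case: nA.
by rewrite mulg1 => -[] /(congr1 (mulg x^-1)); rewrite mulVg mulKg => <-.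
Qed.

Lemma Lsq (A : Klein) (x : gT) : A != 1 -> Lmul (A, x) (A, x) = (1, 1).
Proof. by move=> nA; rewrite /Lmul /= (negbTE nA) Ksq mulVg. Qed.

Lemma phi_N1 x : x ^+ 2 != 1 -> (phi (1, x)).1 = 1.
Proof.
move=> nx; apply/eqP; apply: contraR nx => nA.
have := phiM (1,x) (1,x); rewrite Lmul1r.
case E: (phi (1,x)) nA => [A y] /= nA; rewrite Lsq // -phi_e => /perm_inj [].
by rewrite expgS expg1 => ->.
Qed.

Lemma phi_N x : (phi (1, x)).1 = 1.
Proof.
case: ex2 => z nz.
have [x2|x2] := eqVneq (x ^+ 2) 1; last exact: phi_N1.
have nz' : (z^-1) ^+ 2 != 1 by rewrite expgVn invg_eq1.
have nxz : (x * z) ^+ 2 != 1 by rewrite expgMn ?x2 ?mul1g.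
have -> : (1, x) = Lmul (1, x * z) (1, z^-1) by rewrite Lmul1r mulgK.
by rewrite phiM /Lmul phi_N1 //= phi_N1 //= mulg1.
Qed.

Definition fM x := (phi (1, x)).2.
Definition gK A := (phi (A, 1)).1.
Definition wK A := (phi (A, 1)).2.

Lemma phi_1x x : phi (1, x) = (1, fM x).
Proof. by rewrite /fM; have := phi_N x; case: (phi (1, x)) => A y /= ->. Qed.

Lemma fMM x y : fM (x * y) = fM x * fM y.
Proof. by rewrite {1}/fM -Lmul1r phiM !phi_1x Lmul1r. Qed.

Lemma fM_inj : injective fM.
Proof. by move=> x y E; have := phi_1x x; rewrite E -phi_1x => /perm_inj [->]. Qed.

Lemma phi_dec A x : phi (A, x) = (gK A, wK A * fM x).
Proof. by rewrite -{1}[x]mul1g -Lmul1r phiM phi_1x /gK /wK; case: (phi (A, 1)) => ? ?; rewrite Lmul1r. Qed.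

Lemma Lmul_fst (p q : Lcar gT) : (Lmul p q).1 = p.1 * q.1.
Proof. by rewrite /Lmul; case: ifP. Qed.

Lemma LmulA1 (A B : Klein) : Lmul (A, 1) (B, 1) = (A * B, 1 : gT).
Proof. by rewrite /Lmul /=; case: ifP; rewrite ?invg1 mulg1. Qed.

Lemma fM1 : fM 1 = 1.
Proof. by rewrite /fM phi_e. Qed.

Lemma gKM A B : gK (A * B) = gK A * gK B.
Proof. by rewrite {1}/gK -LmulA1 phiM Lmul_fst. Qed.

Lemma gK1 : gK 1 = 1.
Proof. by rewrite /gK phi_e. Qed.

Lemma wK1 : wK 1 = 1.
Proof. by rewrite /wK phi_e. Qed.

Lemma fM_surj z : exists y, fM y = z.
Proof. by exists (invF fM_inj z); rewrite f_invF. Qed.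

Lemma gK_eq1 A : (gK A == 1) = (A == 1).
Proof.
apply/eqP/eqP => [E|->]; last exact: gK1.
have [y Ey] := fM_surj (wK A).
have := phi_dec A 1; rewrite fM1 mulg1 E -Ey -phi_1x => /perm_inj.
by case.
Qed.

Lemma gK_inj : injective gK.
Proof.
move=> A B E; have: gK (A * B) == 1 by rewrite gKM E Ksq.
by rewrite gK_eq1 => /eqP AB; rewrite -[B]mul1g -(Ksq A) -mulgA AB mulg1.
Qed.
Lemma wK_rel A B : B != 1 -> wK (A * B) = (wK A)^-1 * wK B.
Proof.
move=> nB; rewrite {1}/wK -LmulA1 phiM !phi_dec fM1 !mulg1 /Lmul /=.
by rewrite gK_eq1 (negbTE nB).
Qed.

Lemma inv_sq_ (x : gT) : x ^+ 2 = 1 -> x^-1 = x.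
Proof. by move=> sq; rewrite -[x^-1]mulg1 -sq expgS expg1 mulKg. Qed.

Lemma wK_sq A : wK A ^+ 2 = 1.
Proof.
have [->|nA] := eqVneq A 1; first by rewrite wK1 expg1n.
have [B /andP[nB nAB]] := Kother nA.
have := wK_rel A nAB; rewrite mulgA Ksq mul1g wK_rel // mulgA.
move/(congr1 (mulg^~ (wK B)^-1)); rewrite !mulgK => /(congr1 (mulg (wK A))).
by rewrite mulgV mulg1 mulKVg => E; rewrite expgS expg1 {1}E mulVg.
Qed.

Lemma wKM A B : wK (A * B) = wK A * wK B.
Proof.
have [->|nB] := eqVneq B 1; first by rewrite wK1 !mulg1.
by rewrite wK_rel // inv_sq_ // wK_sq.
Qed.
Lemma wK_alpha A : wK A = alpha (wK ka) (wK kb) A.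
Proof.
case/or4P: (Kcases A) => /eqP->.
- by rewrite wK1 /alpha /= !expg0 mulg1.
- by rewrite /alpha /= expg1 expg0 mulg1.
- by rewrite /alpha /= expg1 expg0 mul1g.
- by rewrite wKM /alpha /= !expg1.
Qed.

Lemma phi_fst p : (phi p).1 = gK p.1.
Proof. by case: p => A x; rewrite phi_dec. Qed.
End Struct.

Section Gen.
Variable gT : finGroupType.
Hypothesis cM : forall x y : gT, commute x y.

Lemma alphaM (u v : gT) A B : u ^+ 2 = 1 -> v ^+ 2 = 1 ->
  alpha u v (A * B) = alpha u v A * alpha u v B.
Proof.
move=> u2 v2; rewrite /alpha /= expg_mod; last exact: u2.
rewrite expg_mod; last exact: v2.
rewrite !expgD !mulgA; congr (_ * _); rewrite -!mulgA; congr (_ * _); exact: cM.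
Qed.

Lemma alpha_sq (u v : gT) A : u ^+ 2 = 1 -> v ^+ 2 = 1 -> alpha u v A ^+ 2 = 1.
Proof.
move=> u2 v2; rewrite /alpha expgMn; last exact: cM.
by rewrite -!expgM !(mulnC _ 2) !expgM u2 v2 !expg1n mulg1.
Qed.

Lemma alpha11 A : alpha (1 : gT) 1 A = 1.
Proof. by rewrite /alpha !expg1n mulg1. Qed.

Lemma alpha1 (u v : gT) : alpha u v 1 = 1.
Proof. by rewrite /alpha /= !expg0 mulg1. Qed.

Lemma alpha_a (u v : gT) : alpha u v ka = u.
Proof. by rewrite /alpha /= expg1 expg0 mulg1. Qed.

Lemma alpha_b (u v : gT) : alpha u v kb = v.
Proof. by rewrite /alpha /= expg1 expg0 mul1g. Qed.

Lemma alpha_ab (u v : gT) : alpha u v (ka * kb) = u * v.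
Proof. by rewrite /alpha /= !expg1. Qed.

Lemma Fplus_inj (f' : {perm Klein}) (f'' : {perm gT}) u v : injective (Fplus f' f'' u v).
Proof.
case=> A x [B y]; rewrite /Fplus /= => -[/perm_inj eAB]; subst B.
by move/mulIg/perm_inj => ->.
Qed.

Definition FP f' f'' u v := perm (@Fplus_inj f' f'' u v).

Lemma FPE f' f'' u v p : FP f' f'' u v p = Fplus f' f'' u v p.
Proof. by rewrite permE. Qed.

Lemma comm_rearr (a b c d : gT) : a * b * (c * d) = c * a * (b * d).
Proof.
by rewrite (cM c a) -!mulgA; congr (_ * _); rewrite !mulgA (cM b c).
Qed.

Lemma Fplus_hom (f' : {perm Klein}) (f'' : {perm gT}) u v :
  {morph f' : x y / x * y} -> {morph f'' : x y / x * y} ->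
  u ^+ 2 = 1 -> v ^+ 2 = 1 ->
  forall p q, Fplus f' f'' u v (Lmul p q) = Lmul (Fplus f' f'' u v p) (Fplus f' f'' u v q).
Proof.
move=> f'M f''M u2 v2 [A x] [B y].
have f'1 : f' 1 = 1.
  by have := f'M 1 1; rewrite mulg1 => /esym/(congr1 (mulg (f' 1)^-1)); rewrite !mulKg mulVg.
have f''1 : f'' 1 = 1.
  by have := f''M 1 1; rewrite mulg1 => /esym/(congr1 (mulg (f'' 1)^-1)); rewrite !mulKg mulVg.
have f''V z : f'' z^-1 = (f'' z)^-1.
  by apply/esym/eqP; rewrite eq_invg_mul -f''M mulgV f''1.
have f'eq1 : (f' B == 1) = (B == 1).
  by rewrite -{1}f'1 (inj_eq perm_inj).
rewrite /Lmul /Fplus /= f'eq1; case: eqP => [->|_].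
  by rewrite alpha1 f'M f''M alphaM // alpha1 !mulg1 -!mulgA (cM (f'' y)) /alpha !mulgA.
rewrite f'M f''M f''V alphaM // invMg (inv_sq (alpha_sq _ u2 v2)).
by rewrite comm_rearr.
Qed.

Lemma AutL_gs : group_set (AutL gT).
Proof.
apply/andP; split.
  by rewrite inE; apply/forallP => p; apply/forallP => q; rewrite !perm1.
apply/subsetP => _ /mulsgP[f g Hf Hg ->]; move: Hf Hg; rewrite !inE => /forallP Hf /forallP Hg.
apply/forallP => p; apply/forallP => q; rewrite !permM.
by rewrite (eqP (forallP (Hf p) q)) (eqP (forallP (Hg _) _)).
Qed.

End Gen.

Canonical AutL_group (gT : finGroupType) := Group (AutL_gs gT).

Lemma Aut_morph (T : finGroupType) (f : {perm T}) :
  f \in Aut [set: T] -> {morph f : x y / x * y}.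
Proof. by move/Aut_morphic/morphicP => fM x y; apply: fM; rewrite inE. Qed.

Lemma AutLP (gT : finGroupType) (f : {perm Lcar gT}) :
  f \in AutL gT -> forall p q, f (Lmul p q) = Lmul (f p) (f q).
Proof. by rewrite inE => /forallP H p q; apply/eqP; exact: (forallP (H p) q). Qed.

Lemma Aset_gs (gT : finGroupType) : group_set (Aset gT).
Proof.
apply/andP; split.
  rewrite inE; apply/exists_inP; exists 1; first exact: group1.
  apply/exists_inP; exists 1; first exact: group1.
  by apply/forallP => -[A x]; rewrite /Fplus alpha11 !perm1 mulg1.
apply/subsetP => _ /mulsgP[f g Hf Hg ->]; move: Hf Hg; rewrite !inE.
case/exists_inP => f1 F1 /exists_inP[f2 F2 /forallP Ef].
case/exists_inP => g1 G1 /exists_inP[g2 G2 /forallP Eg].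
apply/exists_inP; exists (f1 * g1); first exact: groupM.
apply/exists_inP; exists (f2 * g2); first exact: groupM.
apply/forallP => p; rewrite permM (eqP (Ef p)) (eqP (Eg _)) /Fplus /= !alpha11 !mulg1.
by rewrite !permM.
Qed.

Section Main.
Variable gT : finGroupType.
Hypothesis cM : forall x y : gT, commute x y.
Hypothesis ex2 : exists z : gT, z ^+ 2 != 1.

Lemma Hinv_gs : group_set (Hinv gT).
Proof.
apply/andP; split; first by rewrite inE expg1n.
apply/subsetP => _ /mulsgP[x y Hx Hy ->]; move: Hx Hy; rewrite !inE => /eqP x2 /eqP y2.
by rewrite expgMn ?x2 ?y2 ?mulg1 //; exact: cM.
Qed.

Lemma Hinv_mul x y : x \in Hinv gT -> y \in Hinv gT -> x * y \in Hinv gT.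
Proof.
by move=> Hx Hy; exact: (group_setP Hinv_gs).2.
Qed.

Lemma alpha_mul (x1 y1 x2 y2 : gT) A :
  alpha x1 y1 A * alpha x2 y2 A = alpha (x1 * x2) (y1 * y2) A.
Proof.
rewrite /alpha !expgMn; try exact: cM.
by rewrite comm_rearr // (cM (x1 ^+ _)) -!mulgA (cM (y1 ^+ _)).
Qed.

Lemma BsetE (b : {perm Lcar gT}) : b \in Bset gT ->
  exists2 u, u \in Hinv gT & exists2 v, v \in Hinv gT &
    forall p, b p = (p.1, p.2 * alpha u v p.1).
Proof.
rewrite inE => /exists_inP[u Hu /exists_inP[v Hv /forallP E]].
by exists u => //; exists v => // p; rewrite (eqP (E p)) /Fplus !perm1.
Qed.

Lemma Bset_gs : group_set (Bset gT).
Proof.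
apply/andP; split.
  rewrite inE; apply/exists_inP; exists 1; first by rewrite inE expg1n.
  apply/exists_inP; exists 1; first by rewrite inE expg1n.
  by apply/forallP => -[A x]; rewrite /Fplus alpha11 !perm1 mulg1.
apply/subsetP => _ /mulsgP[f g /BsetE[u1 U1 [v1 V1 Ef]] /BsetE[u2 U2 [v2 V2 Eg]] ->].
rewrite inE; apply/exists_inP; exists (u1 * u2); first exact: Hinv_mul.
apply/exists_inP; exists (v1 * v2); first exact: Hinv_mul.
apply/forallP => p; rewrite permM Ef Eg /Fplus /= !perm1 -mulgA alpha_mul.
by [].
Qed.
Lemma Fplus_AutL (g : {perm Lcar gT}) (f' : {perm Klein}) (f'' : {perm gT}) u v :
  {morph f' : x y / x * y} -> {morph f'' : x y / x * y} ->
  u ^+ 2 = 1 -> v ^+ 2 = 1 -> (forall p, g p = Fplus f' f'' u v p) -> g \in AutL gT.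
Proof.
move=> f'M f''M u2 v2 E; rewrite inE; apply/forallP => p; apply/forallP => q.
by rewrite !E Fplus_hom.
Qed.

Lemma Bset_sub : Bset gT \subset AutL gT.
Proof.
apply/subsetP => b; rewrite inE => /exists_inP[u Hu /exists_inP[v Hv /forallP E]].
have u2 : u ^+ 2 = 1 by move: Hu; rewrite inE => /eqP.
have v2 : v ^+ 2 = 1 by move: Hv; rewrite inE => /eqP.
apply: (@Fplus_AutL b 1 1 u v) => //; try by move=> x y; rewrite !perm1.
by move=> p; apply/eqP.
Qed.

Lemma Aset_sub : Aset gT \subset AutL gT.
Proof.
apply/subsetP => b; rewrite inE => /exists_inP[f' Hf' /exists_inP[f'' Hf'' /forallP E]].
apply: (@Fplus_AutL b f' f'' 1 1); try exact: Aut_morph; try exact: expg1n.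
by move=> p; apply/eqP.
Qed.

Lemma Bset_in (b : {perm Lcar gT}) : b \in AutL gT -> (forall p, (b p).1 = p.1) ->
  (forall x, b (1, x) = (1, x)) -> b \in Bset gT.
Proof.
move=> /AutLP bM E1 E2.
rewrite inE; apply/exists_inP; exists (wK b ka); first by rewrite inE (wK_sq cM ex2 bM).
apply/exists_inP; exists (wK b kb); first by rewrite inE (wK_sq cM ex2 bM).
apply/forallP => -[A x]; rewrite (phi_dec cM ex2 bM) /Fplus !perm1 /=.
have -> : gK b A = A by rewrite /gK E1.
have -> : fM b x = x by rewrite /fM E2.
by rewrite (wK_alpha cM ex2 bM) cM.
Qed.
Lemma Bset_norm : AutL gT \subset 'N(Bset gT).
Proof.
apply/subsetP => phi Hphi; rewrite inE; apply/subsetP => _ /imsetP[b Hb ->].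
have phiM := AutLP Hphi.
have bA := subsetP Bset_sub b Hb.
have [u _ [v _ Eb]] := BsetE Hb.
apply: Bset_in.
- by rewrite groupJ.
- move=> p; rewrite conjgE !permM (phi_fst cM ex2 phiM) Eb /=.
  by rewrite -(phi_fst cM ex2 phiM) permKV.
- move=> x; have [y <-] := fM_surj cM ex2 phiM x.
  by rewrite conjgE !permM -(phi_1x cM ex2 phiM) permK Eb /= alpha1 mulg1.
Qed.

Lemma BA_TI : Bset gT :&: Aset gT = 1.
Proof.
apply/setP => g; rewrite in_setI in_set1; apply/andP/eqP => [[Hb Ha]|->]; last first.
  by split; [exact: (group_setP Bset_gs).1 | exact: (group_setP (Aset_gs gT)).1].
have [u _ [v _ Eb]] := BsetE Hb.
move: Ha; rewrite inE => /exists_inP[f' _ /exists_inP[f'' _ /forallP Ea]].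
have Ea' p : g p = (f' p.1, f'' p.2).
  by rewrite (eqP (Ea p)) /Fplus alpha11 mulg1.
apply/permP => -[A x]; rewrite perm1 Ea' /=.
have := Ea' (A, 1); rewrite Eb /= => -[<- _].
have := Ea' (1, x); rewrite Eb /= alpha1 mulg1 => -[_ <-].
by [].
Qed.

Lemma BA_mul : Bset gT * Aset gT = AutL gT.
Proof.
apply/eqP; rewrite eqEsubset mul_subG ?Bset_sub ?Aset_sub //=.
apply/subsetP => phi Hphi; have phiM := AutLP Hphi.
pose gp := perm (gK_inj cM ex2 phiM).
pose fp := perm (fM_inj cM ex2 phiM).
pose a := FP gp fp 1 1.
have Ea p : a p = (gK phi p.1, fM phi p.2).
  by rewrite /a FPE /Fplus alpha11 mulg1 !permE.
have aA : a \in Aset gT.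
  rewrite inE; apply/exists_inP; exists gp.
    rewrite inE; apply/andP; split; first by apply/subsetP => ? _; rewrite inE.
    by apply/morphicP => A B _ _; rewrite !permE (gKM phiM).
  apply/exists_inP; exists fp.
    rewrite inE; apply/andP; split; first by apply/subsetP => ? _; rewrite inE.
    by apply/morphicP => A B _ _; rewrite !permE (fMM cM ex2 phiM).
  by apply/forallP => p; rewrite FPE.
have aL := subsetP Aset_sub a aA.
rewrite -[phi](mulgKV a); apply: mem_mulg => //.
apply: Bset_in.
- by rewrite groupM ?groupV.
- move=> p; rewrite permM; apply: (gK_inj cM ex2 phiM).
  have := congr1 fst (permKV a (phi p)); by rewrite Ea (phi_fst cM ex2 phiM).
- move=> x; rewrite permM (phi_1x cM ex2 phiM).
  have -> : (1, fM phi x) = a (1, x) by rewrite Ea (gK1 phiM).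
  by rewrite permK.
Qed.
Lemma Bset_isog : Bset gT \isog setX (Hinv gT) (Hinv gT).
Proof.
pose BG := Group Bset_gs.
pose HG := Group Hinv_gs.
change (gval BG \isog gval (setX_group HG HG)).
pose h (b : {perm Lcar gT}) := ((b (ka, 1)).2, (b (kb, 1)).2).
have hE (b : {perm Lcar gT}) (u v : gT) : (forall p : Lcar gT, b p = (p.1, p.2 * alpha u v p.1)) -> h b = (u, v).
  by move=> E; rewrite /h !E /= alpha_a alpha_b !mul1g.
have hM : morphic BG h.
  apply/morphicP => b1 b2 /BsetE[u1 _ [v1 _ E1]] /BsetE[u2 _ [v2 _ E2]].
  rewrite (hE _ _ _ E1) (hE _ _ _ E2) (hE _ (u1 * u2) (v1 * v2)) //.
  by move=> p; rewrite permM E1 E2 /= -mulgA alpha_mul.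
apply/isogP; exists (morphm_morphism hM).
  apply/injmP => b1 b2 /BsetE[u1 _ [v1 _ E1]] /BsetE[u2 _ [v2 _ E2]].
  rewrite /= morphmE (hE _ _ _ E1) (hE _ _ _ E2) => -[eu ev].
  by apply/permP => p; rewrite E1 E2 eu ev.
rewrite morphimEdom; apply/setP => -[x y]; rewrite /= in_setX.
apply/imsetP/andP => [[b /BsetE[u Hu [v Hv E]]]|[Hx Hy]].
  by rewrite /= morphmE (hE _ _ _ E) => -[-> ->].
exists (FP 1 1 x y).
  rewrite /= inE; apply/exists_inP; exists x => //; apply/exists_inP; exists y => //.
  by apply/forallP => p; rewrite FPE.
by rewrite /= morphmE (hE _ x y) // => p; rewrite FPE /Fplus !perm1.
Qed.
Lemma card_dprodH (A B : {set gT}) (D : {group gT}) : A \x B = D ->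
  #|D :&: Hinv gT| = (#|A :&: Hinv gT| * #|B :&: Hinv gT|)%N.
Proof.
pose HG := Group Hinv_gs.
move=> dAB; case: (dprodP dAB) => -[GA GB eA eB] defD _ tiAB; subst A B.
have ti : (GA :&: HG) :&: (GB :&: HG) = 1.
  apply/setP => x; rewrite in_set1 !in_setI; apply/idP/eqP => [|->].
    case/andP=> /andP[xA _] /andP[xB _].
    have: x \in GA :&: GB by rewrite inE xA xB.
    by rewrite tiAB => /set1P.
  by rewrite !group1.
suff E : D :&: Hinv gT = (GA :&: Hinv gT) * (GB :&: Hinv gT).
  by rewrite E; exact: (TI_cardMg ti).
apply/eqP; rewrite eqEsubset; apply/andP; split; apply/subsetP => x.
  rewrite inE -defD => /andP[/mulsgP[a b Ha Hb ->]]; rewrite inE => /eqP ab2.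
  have a2 : a ^+ 2 = 1.
    have : a ^+ 2 \in GA :&: GB.
      rewrite inE groupX //=.
      have -> : a ^+ 2 = (b ^+ 2)^-1.
        by apply/eqP; rewrite eq_mulgV1 invgK -expgMn ?ab2 //; exact: cM.
      by rewrite groupV groupX.
    by rewrite tiAB => /set1P.
  have b2 : b ^+ 2 = 1.
    by move: ab2; rewrite expgMn ?a2 ?mul1g //; exact: cM.
  by apply: mem_mulg; rewrite !inE ?Ha ?Hb ?a2 ?b2 eqxx.
case/mulsgP=> a b; rewrite !inE => /andP[Ha /eqP a2] /andP[Hb /eqP b2] ->.
rewrite -defD mem_mulg //= expgMn ?a2 ?b2 ?mulg1 //; exact: cM.
Qed.

Lemma card_bigdprodH (I : Type) (r : seq I) (P : pred I) (F : I -> {set gT}) (D : {group gT}) :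
  \big[dprod/1]_(j <- r | P j) F j = D ->
  #|D :&: Hinv gT| = (\prod_(j <- r | P j) #|F j :&: Hinv gT|)%N.
Proof.
elim: r D => [|j r IH] D; rewrite ?big_nil ?big_cons.
  move=> <-; have -> : (1 : {set gT}) :&: Hinv gT = 1.
    by apply/setP => x; rewrite !inE; case: eqP => // ->; rewrite expg1n eqxx.
  by rewrite cards1.
case: (P j); last exact: IH.
move=> dD; case: (dprodP dD) => -[_ G' _ eG'] _ _ _.
rewrite (card_dprodH dD) eG'; congr (_ * _)%N; exact: IH.
Qed.
Lemma card_cycH (C : {group gT}) : cyclic C -> ~~ odd #|C| -> #|C :&: Hinv gT| = 2.
Proof.
pose HG := Group Hinv_gs.
move=> cycC evC; change (#|C :&: HG| = 2).
have cyc' : cyclic (C :&: HG) by apply: cyclicS cycC; exact: subsetIl.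
have d1 : #|C :&: HG| %| 2.
  rewrite -(exponent_cyclic cyc'); apply/exponentP => x; rewrite !inE.
  by case/andP => _ /eqP.
have dC : 2 %| #|C| by rewrite dvdn2.
have [x Cx ox] := Cauchy (isT : prime 2) dC.
have xH : x \in C :&: HG by rewrite inE Cx inE -{1}ox expg_order eqxx.
have d2 : 2 %| #|C :&: HG| by rewrite -ox order_dvdG.
by apply/eqP; rewrite eqn_dvd d1 d2.
Qed.

Lemma card_oddH (M : {group gT}) : odd #|M| -> #|M :&: Hinv gT| = 1%N.
Proof.
move=> oM; suff -> : M :&: Hinv gT = [set (1 : gT)] by rewrite cards1.
apply/setP => x; rewrite !inE; apply/andP/eqP => [[Mx /eqP x2]|->]; last first.
  by rewrite group1 expg1n.
have: #[x] %| gcdn 2 #|M| by rewrite dvdn_gcd order_dvdn x2 eqxx order_dvdG.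
have: coprime 2 #|M| by rewrite coprime2n.
by rewrite /coprime => /eqP ->; rewrite dvdn1 order_eq1 => /eqP.
Qed.

Lemma HH_abelem : 2.-abelem (setX_group (Group Hinv_gs) (Group Hinv_gs)).
Proof.
apply/abelemP => //; split.
  apply/centsP => x _ y _; rewrite /commute /=.
  by congr (_, _); exact: cM.
move=> x; rewrite /= inE => /andP[]; rewrite !inE => /eqP x1 /eqP x2.
case: x x1 x2 => a b /= x1 x2; rewrite expgS expg1.
move: x1 x2; rewrite (expgS a 1) (expgS b 1) !expg1 => x1 x2.
by change ((a * a, b * b) = (1, 1)); rewrite x1 x2.
Qed.
End Main.

Lemma C2pow_card n : #|C2pow n| = (2 ^ n)%N.
Proof. by rewrite /C2pow cardsT card_ffun !card_ord. Qed.

Lemma C2pow_abelem n : 2.-abelem [set: {dffun forall i : 'I_n, 'Z_2}]%G.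
Proof.
apply/abelemP => //; split.
  apply/centsP => x _ y _; rewrite /commute; apply/ffunP => i.
  by rewrite !mulg_ffun; exact: Zp_mulgC.
move=> x _; apply/ffunP => i; rewrite expgS expg1 mulg_ffun oneg_ffun.
by apply/eqP; case: (x i) => -[|[|]].
Qed.

Theorem proposition5p8 (gT : finGroupType) (s : nat)
    (i : 'I_s -> nat) (C : 'I_s -> {group gT}) (M1 : {group gT}) :
  abelian [set: gT] ->
  ~~ odd #|[set: gT]| ->
  2 < exponent [set: gT] ->
  (0 < s)%N ->
  (forall j, cyclic (C j) /\ #|C j| = (2 * i j)%N /\ (1 <= i j)%N) ->
  odd #|M1| ->
  (\big[dprod/1]_(j < s) (C j : {set gT})) \x M1 = [set: gT] ->
  [/\ Bset gT \isog setX (Hinv gT) (Hinv gT),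
      setX (Hinv gT) (Hinv gT) \isog C2pow (2 * s),
      Bset gT <| AutL gT
    & AutL gT / Bset gT \isog Aset gT].
Proof.
move=> abG _ expG _ HC oM1 dG.
have cM : forall x y : gT, commute x y.
  by move=> x y; exact: (centsP abG) x (in_setT x) y (in_setT y).
have ex2 : exists z : gT, z ^+ 2 != 1.
  apply/existsP; rewrite -negb_forall; apply/negP => /forallP H.
  have : exponent [set: gT] %| 2 by apply/exponentP => x _; apply/eqP.
  by move/dvdn_leq => /(_ isT); rewrite leqNgt expG.
pose BG := Group (Bset_gs cM).
pose AG := Group (Aset_gs gT).
pose HG := Group (Hinv_gs cM).
have cardH : #|Hinv gT| = (2 ^ s)%N.
  rewrite -[Hinv gT]setTI (card_dprodH cM dG) (card_oddH oM1) muln1.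
  case: (dprodP dG) => -[G' _ eG' _] _ _ _.
  rewrite eG' (card_bigdprodH cM eG').
  rewrite (eq_bigr (fun _ => 2)) ?prod_nat_const ?card_ord //.
  move=> j _; have [cj [cardj _]] := HC j.
  by apply: (card_cycH cM cj); rewrite cardj oddM.
split.
- exact: Bset_isog cM.
- change (gval (setX_group HG HG) \isog gval [set: {dffun forall i : 'I_(2 * s), 'Z_2}]%G).
  rewrite (isog_abelem_card _ (HH_abelem cM)) C2pow_abelem /=.
  by rewrite cardsT card_ffun !card_ord cardsX cardH -expnD addnn -mul2n.
- by rewrite /normal (Bset_sub cM) (Bset_norm cM ex2).
- change (gval (AutL_group gT) / gval BG \isog gval AG).
  rewrite isog_sym; apply: sdprod_isog.
  rewrite sdprodE.
  + exact: BA_mul cM ex2.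
  + exact: subset_trans (Aset_sub cM) (Bset_norm cM ex2).
  + exact: BA_TI cM.
Qed.
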